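(* Let $\mathscr H$ be a complex Hilbert space and $\mathbf{T}=(T_1,\dots,T_d)\in\mathbb{B}(\mathscr H)^d$. Then for every positive integer $n$, $$w_e(\mathbf{T}^n)\le\sqrt{d}\,w_e^n(\mathbf{T}).$$
   Context: $\mathbb{B}(\mathscr H)$ denotes the bounded linear operators on $\mathscr H$. For $\mathbf{T}=(T_1,\dots,T_d)\in\mathbb{B}(\mathscr H)^d$, $w_e(\mathbf{T})=\sup\{(\sum_{k=1}^d|\langle T_kx,x\rangle|^2)^{1/2}: \|x\|=1\}$ and $\mathbf{T}^n=(T_1^n,\dots,T_d^n)$. *)

(* Defs.v *)
From HB Require Import structures.
From mathcomp Require Import all_boot all_order all_algebra.
From mathcomp Require Import complex.
From mathcomp Require Import boolp classical_sets reals.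
Set Implicit Arguments. Unset Strict Implicit. Unset Printing Implicit Defensive.
Import Order.TTheory GRing.Theory Num.Theory.
Local Open Scope ring_scope.
Local Open Scope classical_set_scope.

Section Hilbert.
Variables (R : realType) (V : lmodType R[i]) (ip : V -> V -> R[i]).

Definition ip_norm (x : V) : R := Num.sqrt (complex.Re (ip x x)).

Definition is_inner_product : Prop :=
  [/\ forall (a : R[i]) (x y z : V), ip (a *: x + y) z = a * ip x z + ip y z,
      forall x y : V, ip y x = conjc (ip x y),
      forall x : V, 0 <= complex.Re (ip x x)
    & forall x : V, ip x x = 0 -> x = 0].

Definition ip_complete : Prop :=
  forall u : nat -> V,
    (forall e : R, 0 < e -> exists N : nat, forall m n : nat,
        (N <= m)%N -> (N <= n)%N -> ip_norm (u m - u n) < e) ->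
    exists l : V, forall e : R, 0 < e -> exists N : nat, forall n : nat,
        (N <= n)%N -> ip_norm (u n - l) < e.

Definition is_complex_hilbert : Prop := is_inner_product /\ ip_complete.

Definition bounded_op (T : V -> V) : Prop :=
  (forall (a : R[i]) (x y : V), T (a *: x + y) = a *: T x + T y) /\
  exists c : R, forall x : V, ip_norm (T x) <= c * ip_norm x.

Definition euclid_oprad (d : nat) (T : 'I_d -> V -> V) : R :=
  sup [set Num.sqrt (\sum_(k < d) (Normc.normc (ip (T k x) x)) ^+ 2)
      | x in [set x : V | ip_norm x = 1]].

Definition tuple_pow (d : nat) (T : 'I_d -> V -> V) (n : nat) : 'I_d -> V -> V :=
  fun k => iter n (T k).

End Hilbert.

(* Main.v *)
Require Import Defs.
From HB Require Import structures.
From mathcomp Require Import all_boot all_order all_algebra.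
From mathcomp Require Import complex.
From mathcomp Require Import boolp classical_sets reals.
Import Order.TTheory GRing.Theory Num.Theory.
Local Open Scope ring_scope.
Local Open Scope complex_scope.
From mathcomp Require Import separable cyclotomic.
Lemma prim_root_exists_C (R : realType) n : (n > 0)%N -> exists z : R[i], n.-primitive_root z.
Proof.
pose p : {poly R[i]} := 'X^n - 1; have [r Dp] := closed_field_poly_normal p.
move=> n_gt0; rewrite (monicP _) ?monicXnsubC // scale1r in Dp.
have rn1: all n.-unity_root r by apply/allP=> z; rewrite -root_prod_XsubC -Dp.
have sz_r: (n < (size r).+1)%N.
  by rewrite -(size_prod_XsubC r id) -Dp size_XnsubC.
have [|z] := hasP (cyclic.has_prim_root n_gt0 rn1 _ sz_r); last by exists z.
by rewrite -separable_prod_XsubC -Dp separable_Xn_sub_1 // pnatr_eq0 -lt0n.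
Qed.

Lemma sum_prim_pow (R : realType) n (w : R[i]) (m : nat) : n.-primitive_root w ->
  (0 < m < n)%N -> \sum_(k < n) (w ^+ m) ^+ k = 0.
Proof.
move=> pw /andP[m0 mn].
have n0 : (0 < n)%N by apply: leq_trans mn.
have h : (w ^+ m) ^+ n - 1 = 0 by rewrite -exprM mulnC exprM (prim_expr_order pw) expr1n subrr.
rewrite subrX1 in h.
have : w ^+ m - 1 != 0.
  rewrite subr_eq0 -(expr0 w) (eq_prim_root_expr pw) mod0n modn_small //.
  by rewrite -lt0n.
move=> hne; move/eqP: h; rewrite mulf_eq0 (negbTE hne) /= => /eqP //.
Qed.
Lemma conjcD (R : realType) (a b : R[i]) : (a + b)^* = a^* + b^*.
Proof. exact: rmorphD. Qed.
Lemma conjcM (R : realType) (a b : R[i]) : (a * b)^* = a^* * b^*.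
Proof. exact: rmorphM. Qed.
Lemma conjcN (R : realType) (a : R[i]) : (- a)^* = - a^*.
Proof. exact: rmorphN. Qed.

Section IP.
Variables (R : realType) (V : lmodType R[i]) (ip : V -> V -> R[i]).
Hypothesis hip : is_inner_product ip.

Lemma ipDl x y z : ip (x + y) z = ip x z + ip y z.
Proof. by case: (hip : [/\ _, _, _ & _]) => h _ _ _; rewrite -{1}[x]scale1r h mul1r. Qed.
Lemma ip0l z : ip 0 z = 0.
Proof.
have := ipDl 0 0 z; rewrite addr0 => h.
by apply: (addrI (ip 0 z)); rewrite addr0 -h.
Qed.
Lemma ipZl a x z : ip (a *: x) z = a * ip x z.
Proof. by case: (hip : [/\ _, _, _ & _]) => h _ _ _; rewrite -[a *: x]addr0 h ip0l addr0. Qed.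
Lemma ipC x y : ip y x = (ip x y)^*.
Proof. by case: (hip : [/\ _, _, _ & _]). Qed.
Lemma ipDr x y z : ip z (x + y) = ip z x + ip z y.
Proof. by rewrite ipC ipDl conjcD [ip z x]ipC [ip z y]ipC. Qed.
Lemma ipZr a x z : ip z (a *: x) = a^* * ip z x.
Proof. by rewrite ipC ipZl conjcM [ip z x]ipC. Qed.
Lemma ip0r z : ip z 0 = 0.
Proof. by rewrite ipC ip0l conjc0. Qed.
Lemma ipNl x z : ip (- x) z = - ip x z.
Proof. by rewrite -scaleN1r ipZl mulN1r. Qed.
Lemma ipNr x z : ip z (- x) = - ip z x.
Proof. by rewrite ipC ipNl conjcN [ip z x]ipC. Qed.
Lemma ipBl x y z : ip (x - y) z = ip x z - ip y z.
Proof. by rewrite ipDl ipNl. Qed.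
Lemma ipBr x y z : ip z (x - y) = ip z x - ip z y.
Proof. by rewrite ipDr ipNr. Qed.
Lemma ip_sumr (I : finType) (f : I -> V) z : ip z (\sum_i f i) = \sum_i ip z (f i).
Proof. by apply: (big_rec2 (fun a b => ip z a = b)) => [|i a b _ <-]; rewrite ?ip0r ?ipDr. Qed.
Lemma ip_suml (I : finType) (f : I -> V) z : ip (\sum_i f i) z = \sum_i ip (f i) z.
Proof. by apply: (big_rec2 (fun a b => ip a z = b)) => [|i a b _ <-]; rewrite ?ip0l ?ipDl. Qed.
Lemma ip_self_real x : ip x x = (complex.Re (ip x x))%:C.
Proof.
have := ipC x x; case: (ip x x) => a b /= [] hb.
have : b *+ 2 == 0 by rewrite mulr2n {2}hb subrr.
rewrite mulrn_eq0 /= => /eqP ->.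
by [].
Qed.
Lemma ip_self_ge0 x : 0 <= complex.Re (ip x x).
Proof. by case: (hip : [/\ _, _, _ & _]). Qed.
Lemma ip_self_eq0 x : complex.Re (ip x x) = 0 -> x = 0.
Proof. by case: (hip : [/\ _, _, _ & _]) => _ _ _ h e; apply: h; rewrite ip_self_real e. Qed.
End IP.
Arguments ipDl {R V ip} hip.
Arguments ip0l {R V ip} hip.
Arguments ipZl {R V ip} hip.
Arguments ipC {R V ip} hip.
Arguments ipDr {R V ip} hip.
Arguments ipZr {R V ip} hip.
Arguments ip0r {R V ip} hip.
Arguments ipNl {R V ip} hip.
Arguments ipNr {R V ip} hip.
Arguments ipBl {R V ip} hip.
Arguments ipBr {R V ip} hip.
Arguments ip_sumr {R V ip} hip.
Arguments ip_suml {R V ip} hip.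
Arguments ip_self_real {R V ip} hip.
Arguments ip_self_ge0 {R V ip} hip.
Arguments ip_self_eq0 {R V ip} hip.
Section Re.
Variable R : realType.
Lemma normE (z : R[i]) : `|z| = (Normc.normc z)%:C. Proof. reflexivity. Qed.
Lemma ReD (a b : R[i]) : complex.Re (a + b) = complex.Re a + complex.Re b.
Proof. by case: a; case: b. Qed.
Lemma ReN (a : R[i]) : complex.Re (- a) = - complex.Re a.
Proof. by case: a. Qed.
Lemma ReRM (r : R) (z : R[i]) : complex.Re (r%:C * z) = r * complex.Re z.
Proof. by case: z => a b /=; rewrite mul0r subr0. Qed.
Lemma Re_le_normc (z : R[i]) : complex.Re z <= Normc.normc z.
Proof.
case: z => a b /=. apply: le_trans (ler_norm a) _.
by rewrite -sqrtr_sqr ler_sqrt ?lerDl ?addr_ge0 ?sqr_ge0.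
Qed.
Lemma normc_ge0 (z : R[i]) : 0 <= Normc.normc z.
Proof. by case: z => a b /=; rewrite sqrtr_ge0. Qed.
Lemma natC n : (n%:R : R[i]) = (n%:R : R)%:C.
Proof. by rewrite rmorph_nat. Qed.
Lemma Re_sum (I : finType) (f : I -> R[i]) : complex.Re (\sum_i f i) = \sum_i complex.Re (f i).
Proof. by apply: (big_rec2 (fun a b => complex.Re a = b)) => [|i a b _ <-]; rewrite ?ReD. Qed.
Lemma conjcR (r : R) : (r%:C)^* = r%:C.
Proof. by rewrite /= oppr0. Qed.
Lemma conjNR (r : R) : Num.conj (r%:C) = r%:C.
Proof. exact: conjcR. Qed.
End Re.

Section Berger.
Variables (R : realType) (V : lmodType R[i]) (ip : V -> V -> R[i]).
Hypothesis hip : is_inner_product ip.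
Variable S : V -> V.
Hypothesis hSD : forall x y, S (x + y) = S x + S y.
Hypothesis hSZ : forall a x, S (a *: x) = a *: S x.

Lemma S0 : S 0 = 0.
Proof. have := hSD 0 0; rewrite addr0 => h; by apply: (addrI (S 0)); rewrite addr0 -h. Qed.

Lemma S_sum (I : finType) (f : I -> V) : S (\sum_i f i) = \sum_i S (f i).
Proof. by apply: (big_rec2 (fun a b => S a = b)) => [|i a b _ <-]; rewrite ?S0 ?hSD. Qed.

Lemma tele (n : nat) (x : V) (c : R[i]) :
  \sum_(m < n) (c ^+ m *: iter m S x) - c *: S (\sum_(m < n) (c ^+ m *: iter m S x))
  = x - c ^+ n *: iter n S x.
Proof.
set a := fun m => c ^+ m *: iter m S x.
have e2 : c *: S (\sum_(m < n) a m) = \sum_(m < n) a m.+1.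
  rewrite S_sum scaler_sumr; apply: eq_bigr => m _.
  by rewrite /a hSZ scalerA -exprS iterS.
have e1 : \sum_(m < n) (a m.+1 - a m) = a n - a 0.
  by rewrite -(big_mkord xpredT (fun m => a m.+1 - a m)) telescope_sumr.
rewrite e2 -opprB -sumrB e1 opprB /a expr0 scale1r.
by [].
Qed.

Lemma sum_xk n (w : R[i]) (pw : n.-primitive_root w) x :
  \sum_(k < n) \sum_(m < n) ((w ^+ k) ^+ m *: iter m S x) = n%:R *: x.
Proof.
rewrite exchange_big /=.
rewrite (eq_bigr (fun m : 'I_n => (\sum_(k < n) (w ^+ m) ^+ k) *: iter m S x)); last first.
  by move=> m _; rewrite scaler_suml; apply: eq_bigr => k _; rewrite exprAC.
case: n pw => [|n] pw; first by rewrite big_ord0 scale0r.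
rewrite big_ord_recl /= (eq_bigr (fun _ => 1)); last by move=> k _; rewrite expr0 expr1n.
rewrite sumr_const card_ord big1 ?addr0 ?scale1r //.
move=> i _; rewrite (@sum_prim_pow _ _ _ _ pw) ?scale0r //=.
by rewrite ltnS ltn_ord.
Qed.

Lemma normc_pow1 n (w : R[i]) (pw : n.-primitive_root w) k : Normc.normc (w ^+ k) = 1.
Proof.
have n0 : (0 < n)%N := prim_order_gt0 pw.
have nw : `|w| = 1.
  apply/eqP; rewrite -(pexpr_eq1 n0 (normr_ge0 w)) -normrX (prim_expr_order pw).
  by rewrite normr1.
have : (Normc.normc (w ^+ k))%:C = (1 : R)%:C by rewrite -normE normrX nw expr1n.
by move/complexI.
Qed.

Lemma berger_core n (hn : (0 < n)%N)
  (H : forall (u : R[i]) y, Normc.normc u <= 1 ->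
         complex.Re (u * ip (S y) y) <= complex.Re (ip y y)) x :
  complex.Re (ip (iter n S x) x) <= complex.Re (ip x x).
Proof.
have [w pw] := @prim_root_exists_C R n hn.
have wn : w ^+ n = 1 := prim_expr_order pw.
pose xk (k : 'I_n) := \sum_(m < n) ((w ^+ k) ^+ m *: iter m S x).
have Ek k : xk k - w ^+ k *: S (xk k) = x - iter n S x.
  by rewrite /xk tele exprAC wn expr1n scale1r.
have key : n%:R * ip (x - iter n S x) x =
    \sum_k (ip (xk k) (xk k) - w ^+ k * ip (S (xk k)) (xk k)).
  rewrite -(@conjc_nat R n) -(ipZr hip) -(@sum_xk _ _ pw) (ip_sumr hip); apply: eq_bigr => k _.
  by rewrite -{1}(Ek k) (ipBl hip) (ipZl hip).
have : 0 <= complex.Re (n%:R * ip (x - iter n S x) x).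
  rewrite key Re_sum; apply: sumr_ge0 => k _.
  rewrite ReD ReN subr_ge0; apply: H.
  by rewrite (@normc_pow1 _ _ pw).
rewrite natC ReRM (ipBl hip) ReD ReN pmulr_rge0 ?ltr0n // subr_ge0.
by [].
Qed.
End Berger.

Section Phase.
Variable R : realType.
Lemma cjE (c : R[i]) : Num.conj c = conjc c. Proof. reflexivity. Qed.
Lemma normc_real (r : R) : 0 <= r -> Normc.normc (r%:C) = r.
Proof. by move=> r0; rewrite /= expr0n addr0 sqrtr_sqr ger0_norm. Qed.
Lemma ReC (r : R) : complex.Re (r%:C) = r. Proof. by []. Qed.
Lemma phase (c : R[i]) : exists t : R[i], Normc.normc t = 1 /\ t * c = (Normc.normc c)%:C.
Proof.
have [->|c0] := eqVneq c 0.
  by exists 1; split; [exact: Normc.normc1 | rewrite mulr0 Normc.normc0].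
have nc0 : `|c| != 0 by rewrite normr_eq0.
exists (Num.conj c / `|c|); split.
  apply: complexI; rewrite -normE normrM normfV norm_conjC normr_id divff //.
rewrite mulrAC -[Num.conj c * c]/(c^* * c)%R -normCKC expr2 mulrK ?unitfE //.
Qed.
End Phase.

Section BergerW.
Variables (R : realType) (V : lmodType R[i]) (ip : V -> V -> R[i]).
Hypothesis hip : is_inner_product ip.
Variable S : V -> V.
Hypothesis hSD : forall x y, S (x + y) = S x + S y.
Hypothesis hSZ : forall a x, S (a *: x) = a *: S x.

Lemma iter_scale (a : R[i]) n x : iter n (fun y => a *: S y) x = a ^+ n *: iter n S x.
Proof.
elim: n => [|n IH]; first by rewrite expr0 scale1r.
by rewrite !iterS IH hSZ scalerA exprS.
Qed.

Lemma berger_pos n (hn : (0 < n)%N) (W : R) (W0 : 0 < W)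
  (H : forall y, Normc.normc (ip (S y) y) <= W * complex.Re (ip y y)) x :
  Normc.normc (ip (iter n S x) x) <= W ^+ n * complex.Re (ip x x).
Proof.
set c := ip (iter n S x) x.
have [t [t1 tc]] := @phase _ c.
set v := n.-root t.
have vn : v ^+ n = t by rewrite /v rootCK.
have nv : Normc.normc v = 1.
  have : `|v| = 1.
    apply/eqP; rewrite -(pexpr_eq1 hn (normr_ge0 v)) -normrX vn normE t1.
    by [].
  by rewrite normE => -[].
set a := v / W%:C.
pose S' := fun y => a *: S y.
have hS'D : forall x y, S' (x + y) = S' x + S' y by move=> y z; rewrite /S' hSD scalerDr.
have hS'Z : forall b y, S' (b *: y) = b *: S' y.
  by move=> b y; rewrite /S' hSZ !scalerA mulrC.
have HS : forall (u : R[i]) y, Normc.normc u <= 1 ->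
         complex.Re (u * ip (S' y) y) <= complex.Re (ip y y).
  move=> u y u1; rewrite /S' (ipZl hip) mulrA.
  apply: le_trans (@Re_le_normc _ _) _.
  rewrite !Normc.normcM Normc.normcV nv (@normc_real _ W (ltW W0)) mul1r.
  have hy := ip_self_ge0 hip y.
  apply: (@le_trans _ _ (W^-1 * Normc.normc (ip (S y) y))).
    rewrite -mulrA ler_piMl // ?mulr_ge0 ?invr_ge0 ?(ltW W0) ?(@normc_ge0 _ _) //.
  by rewrite mulrC ler_pdivrMr // mulrC H.
have := @berger_core _ _ _ hip _ hS'D hS'Z _ hn HS x.
rewrite /S' iter_scale (ipZl hip) -/c /a exprMn vn -mulrA mulrC -mulrA [c * t]mulrC tc.
rewrite exprVn -rmorphXn -fmorphV -rmorphM ReC mulrC ler_pdivrMr ?exprn_gt0 // mulrC.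
by [].
Qed.

Lemma berger_ge0 n (hn : (0 < n)%N) (W : R) (W0 : 0 <= W)
  (H : forall y, Normc.normc (ip (S y) y) <= W * complex.Re (ip y y)) x :
  Normc.normc (ip (iter n S x) x) <= W ^+ n * complex.Re (ip x x).
Proof.
have [Wp|] := boolP (0 < W); first exact: berger_pos.
rewrite lt_def W0 andbT negbK => /eqP W00; subst W.
set Q := complex.Re (ip x x).
have hQ : 0 <= Q := ip_self_ge0 hip x.
rewrite expr0n gtn_eqF // mul0r.
apply/ler_addgt0Pr => e e0; rewrite add0r.
pose eps := Num.min 1 (e / (Q + 1)).
have Q1 : 0 < Q + 1 by rewrite ltr_wpDl.
have eps0 : 0 < eps by rewrite lt_min ltr01 divr_gt0.
have eps1 : eps <= 1 by rewrite ge_min lexx.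
have eps2 : eps <= e / (Q + 1) by rewrite ge_min lexx orbT.
have H' : forall y, Normc.normc (ip (S y) y) <= eps * complex.Re (ip y y).
  move=> y; apply: le_trans (H y) _; rewrite mul0r mulr_ge0 ?(ltW eps0) //.
  exact: ip_self_ge0.
apply: le_trans (@berger_pos n hn eps eps0 H' x) _.
apply: (@le_trans _ _ (eps * Q)).
  apply: ler_wpM2r => //.
  case: n hn {H'} => // n _; rewrite exprS ler_piMr ?(ltW eps0) //.
  by rewrite exprn_ile1 ?(ltW eps0).
apply: (@le_trans _ _ (e / (Q + 1) * Q)); first exact: ler_wpM2r.
rewrite mulrAC ler_pdivrMr // ler_wpM2l ?(ltW e0) //.
by rewrite lerDl ler01.
Qed.
End BergerW.

Section Lin.
Variables (R : realType) (V : lmodType R[i]) (f : V -> V).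
Hypothesis hf : forall (a : R[i]) (x y : V), f (a *: x + y) = a *: f x + f y.
Lemma lin0 : f 0 = 0.
Proof.
have := hf 1 0 0; rewrite !scale1r addr0 => h.
by apply: (addrI (f 0)); rewrite addr0 -h.
Qed.
Lemma linD x y : f (x + y) = f x + f y.
Proof. by rewrite -{1}[x]scale1r hf scale1r. Qed.
Lemma linZ a x : f (a *: x) = a *: f x.
Proof. by rewrite -[a *: x]addr0 hf lin0 addr0. Qed.
End Lin.

From mathcomp Require Import lra.

Section Main.
Variables (R : realType) (V : lmodType R[i]) (ip : V -> V -> R[i]).
Hypothesis hip : is_inner_product ip.

Lemma tconj (t : R[i]) : Normc.normc t = 1 -> t * conjc t = 1.
Proof.
move=> t1; rewrite -[conjc t]/(Num.conj t) -normCK normE t1.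
by rewrite expr1n.
Qed.

Lemma CSb u v : Normc.normc (ip u v) <=
  (complex.Re (ip u u) + complex.Re (ip v v)) / 2.
Proof.
have [t [t1 tc]] := @phase _ (ip u v).
have := ip_self_ge0 hip (t *: u - v).
rewrite (ipBl hip) !(ipBr hip) !(ipZl hip) !(ipZr hip) [ip v u](ipC hip).
rewrite mulrA tconj // mul1r tc -conjcM tc conjc_real.
rewrite !ReD !ReN !ReC.
rewrite ReD ReN ReC; move=> h; lra.
Qed.

Lemma sq_le (a b : R) : 0 <= a -> a <= b -> a ^+ 2 <= b ^+ 2.
Proof. by move=> a0 ab; apply: lerXn2r; rewrite ?nnegrE //; exact: le_trans ab. Qed.

Lemma unit_Re x : ip_norm ip x = 1 -> complex.Re (ip x x) = 1.
Proof. by rewrite /ip_norm => h; rewrite -(sqr_sqrtr (ip_self_ge0 hip x)) h expr1n. Qed.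

Lemma sset_bounded d (T : 'I_d -> V -> V) (hT : forall k, bounded_op ip (T k)) :
  has_ubound [set Num.sqrt (\sum_(k < d) (Normc.normc (ip (T k x) x)) ^+ 2)
      | x in [set x : V | ip_norm ip x = 1]].
Proof.
have [c hc] := choice (fun k => proj2 (hT k)).
exists (Num.sqrt (\sum_(k < d) (((c k) ^+ 2 + 1) / 2) ^+ 2)).
move=> _ [x /= hx <-].
rewrite ler_sqrt; last by apply: sumr_ge0 => k _; exact: sqr_ge0.
apply: ler_sum => k _; apply: sq_le; first exact: normc_ge0.
apply: le_trans (CSb _ _) _.
rewrite (@unit_Re x hx) ler_pM2r ?invr_gt0 ?ltr0n // lerD2r.
have h := hc k x; rewrite hx mulr1 in h.
rewrite -(sqr_sqrtr (ip_self_ge0 hip (T k x))); apply: sq_le => //.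
exact: sqrtr_ge0.
Qed.

Lemma numr_bound d (T : 'I_d -> V -> V) (hT : forall k, bounded_op ip (T k)) k y :
  Normc.normc (ip (T k y) y) <= euclid_oprad ip T * complex.Re (ip y y).
Proof.
have hl : forall a x z, T k (a *: x + z) = a *: T k x + T k z by case: (hT k).
have [Q0|Qp] := eqVneq (complex.Re (ip y y)) 0.
  move/(ip_self_eq0 hip): (Q0) => ->.
  by rewrite (@lin0 _ _ _ hl) (ip0r hip) Normc.normc0 /= mulr0.
set Q := complex.Re (ip y y) in Qp *.
have Q0 : 0 < Q by rewrite lt_def Qp ip_self_ge0.
set r := Num.sqrt Q.
have r0 : 0 < r by rewrite sqrtr_gt0.
have rQ : r ^+ 2 = Q by rewrite sqr_sqrtr // ltW.
set u := (r^-1)%:C *: y.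
have ipu : forall z, ip z u = (r^-1)%:C * ip z y.
  by move=> z; rewrite (ipZr hip) conjNR.
have hu : ip_norm ip u = 1.
  rewrite /ip_norm ipu (ipZl hip) mulrA -rmorphM ReRM -/Q -rQ.
  by rewrite -expr2 -exprMn mulVf ?gt_eqF // expr1n sqrtr1.
have hb := @sset_bounded d T hT.
have inS : Num.sqrt (\sum_(j < d) (Normc.normc (ip (T j u) u)) ^+ 2) <= euclid_oprad ip T.
  by apply: (ub_le_sup hb); exists u.
have hk : Normc.normc (ip (T k u) u) <= euclid_oprad ip T.
  apply: le_trans inS.
  have -> : Normc.normc (ip (T k u) u) = Num.sqrt ((Normc.normc (ip (T k u) u)) ^+ 2).
    by rewrite sqrtr_sqr ger0_norm // normc_ge0.
  rewrite ler_sqrt; last by apply: sumr_ge0 => j _; exact: sqr_ge0.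
  rewrite (bigD1 k) //= lerDl; apply: sumr_ge0 => j _; exact: sqr_ge0.
move: hk; rewrite ipu /u (@linZ _ _ _ hl) (ipZl hip) mulrA -rmorphM Normc.normcM.
rewrite (@normc_real _ (r^-1 * r^-1)); last by rewrite mulr_ge0 // invr_ge0 ltW.
by rewrite -invfM -expr2 rQ mulrC ler_pdivrMr.
Qed.
End Main.
Local Open Scope classical_set_scope.

Theorem theorem2p6 (R : realType) (V : lmodType R[i]) (ip : V -> V -> R[i])
  (hH : is_complex_hilbert ip) (d : nat) (T : 'I_d -> V -> V)
  (hT : forall k : 'I_d, bounded_op ip (T k)) (n : nat) (hn : (0 < n)%N) :
  euclid_oprad ip (tuple_pow T n) <= Num.sqrt (d%:R) * euclid_oprad ip T ^+ n.
Proof.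
have hip : is_inner_product ip by case: hH.
set W := euclid_oprad ip T.
have hl : forall k a x z, T k (a *: x + z) = a *: T k x + T k z by move=> k; case: (hT k).
have hb := @sset_bounded _ _ _ hip _ _ hT.
case: (pselect (exists x : V, ip_norm ip x = 1)) => [[x0 hx0]|nx]; last first.
  have E0 : forall (F : 'I_d -> V -> V),
      [set Num.sqrt (\sum_(k < d) (Normc.normc (ip (F k x) x)) ^+ 2)
      | x in [set x : V | ip_norm ip x = 1]] = set0.
    move=> F; apply/seteqP; split => y //= [x hx _]; exfalso; apply: nx; by exists x.
  rewrite /euclid_oprad E0 sup0; apply: mulr_ge0; first exact: sqrtr_ge0.
  by rewrite /W /euclid_oprad E0 sup0 expr0n gtn_eqF.
have hW : 0 <= W.
  apply: (le_trans (sqrtr_ge0 (\sum_(k < d) (Normc.normc (ip (T k x0) x0)) ^+ 2))).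
  by apply: (ub_le_sup hb); exists x0.
rewrite /euclid_oprad; apply: ge_sup.
  by eexists; exists x0.
move=> _ [x hx <-]; rewrite /tuple_pow.
have hk : forall k, Normc.normc (ip (iter n (T k) x) x) <= W ^+ n.
  move=> k.
  have := @berger_ge0 _ _ _ hip (T k) (@linD _ _ _ (hl k)) (@linZ _ _ _ (hl k)) n hn W hW
    (@numr_bound _ _ _ hip _ _ hT k) x.
  by rewrite (@unit_Re _ _ _ hip x hx) mulr1.
apply: (@le_trans _ _ (Num.sqrt (\sum_(k < d) (W ^+ n) ^+ 2))).
  rewrite ler_sqrt; last by apply: sumr_ge0 => k _; exact: sqr_ge0.
  by apply: ler_sum => k _; apply: sq_le; [exact: normc_ge0 | exact: hk].
rewrite sumr_const card_ord -(mulr_natl ((W ^+ n) ^+ 2) d) sqrtrM ?ler0n // sqrtr_sqr ger0_norm //.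
exact: exprn_ge0.
Qed.
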